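(* Let $\mathcal T$ be a theory of $\mathsf{LGI}$, let $\alpha,\beta$ be basic expressions and $c,d\in[0,1]$, and assume every element of $\tau(\alpha,c)$ and of $\tau(\beta,d)$ is provable from $\mathcal T$ in $\mathsf{LGI}$. Then for $r\in[0,1]$: if $r<1-c+d$ then $\mathcal T\vdash_{\mathsf{LGI}}\alpha\Rightarrow_r\beta$, and if $r>1-c+d$ then $\mathcal T\vdash_{\mathsf{LGI}}\lnot(\alpha\Rightarrow_r\beta)$.
   Context: Fix a continuous t-norm $\odot$ on $[0,1]$ and let $c\oplus d = 1-((1-c)\odot(1-d))$. Write $c\odot_{\L} d=\max(c+d-1,0)$, $c\oplus_{\L} d=\min(c+d,1)$. Syntax of $\mathsf{LGI}$: countably many variables $\phi_0,\phi_1,\dots$ and constants $\bot,\top$. Basic expressions are built from variables and constants by binary $\land,\lor,\odot$ and unary $\sim$. A graded implication is written $\alpha\Rightarrow_c\beta$ with $\alpha,\beta$ basic expressions, $c\in[0,1]$. Formulas are built from graded implications by classical $\land,\lor,\lnot$; $\Phi\to\Psi$ abbreviates $\lnot\Phi\lor\Psi$. A theory is a set of formulas. For a basic expression $\alpha$ and $c\in[0,1]$, $\tau(\alpha,c)=\{\top\Rightarrow_t\alpha : t\in[0,1],\ t<c\}\cup\{\alpha\Rightarrow_{1-t}\bot : t\in[0,1],\ t>c\}$. Calculus $\mathsf{LGI}$: axioms are (i) all substitution instances (by graded implications) of classical propositional tautologies; (ii) for all basic expressions $\alpha,\beta,\gamma$ and $c,d\in[0,1]$: ($\land_1$) $(\alpha\Rightarrow_d\beta)\land(\alpha\Rightarrow_d\gamma)\to(\alpha\Rightarrow_d\beta\land\gamma)$;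 ($\land_2$) $\alpha\land\beta\Rightarrow_1\alpha$; ($\land_3$) $\alpha\land\beta\Rightarrow_1\beta$; ($\lor_1$) $(\alpha\Rightarrow_d\gamma)\land(\beta\Rightarrow_d\gamma)\to(\alpha\lor\beta\Rightarrow_d\gamma)$; ($\lor_2$) $\alpha\Rightarrow_1\alpha\lor\beta$; ($\lor_3$) $\beta\Rightarrow_1\alpha\lor\beta$; ($\odot_1$) $(\top\Rightarrow_c\alpha)\land(\top\Rightarrow_d\beta)\to(\top\Rightarrow_{c\odot d}\alpha\odot\beta)$; ($\odot_2$) $(\alpha\Rightarrow_c\bot)\land(\beta\Rightarrow_d\bot)\to(\alpha\odot\beta\Rightarrow_{c\oplus d}\bot)$; ($\odot_3$) $\top\Rightarrow_1\top\odot\top$; ($\sim_1$) $(\alpha\Rightarrow_d\beta)\to(\sim\beta\Rightarrow_d\sim\alpha)$; ($\sim_2$) $\sim\sim\alpha\Rightarrow_1\alpha$; ($\sim_3$) $\alpha\Rightarrow_1\sim\sim\alpha$; ($\top$) $\alpha\Rightarrow_1\top$; ($\bot$) $\bot\Rightarrow_1\alpha$; (0) $\alpha\Rightarrow_0\beta$; ($c$) $\alpha\Rightarrow_c\alpha$; (inkons) $\lnot(\top\Rightarrow_c\bot)$ for $c>0$; (trans$_1$) $(\alpha\Rightarrow_c\beta)\land(\beta\Rightarrow_d\gamma)\to(\alpha\Rightarrow_{c\odot_{\L}d}\gamma)$; (trans$_2$) $(\alpha\Rightarrow_c\bot)\land(\top\Rightarrow_d\beta)\to(\alpha\Rightarrow_{c\oplus_{\L}d}\beta)$;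 (lin$_1$) $(\alpha\Rightarrow_1\beta)\lor(\beta\Rightarrow_1\alpha)$; (lin$_2$) $(\top\Rightarrow_d\alpha)\lor(\alpha\Rightarrow_{1-d}\bot)$. The only rule is modus ponens. $\mathcal T\vdash_{\mathsf{LGI}}\Phi$ means $\Phi$ has a finite derivation from axioms and elements of $\mathcal T$ by modus ponens. *)

(* Defs.v *)
From Stdlib Require Import Reals.
Open Scope R_scope.

Definition in01 (x : R) : Prop := 0 <= x <= 1.

Definition is_cont_tnorm (tn : R -> R -> R) : Prop :=
  (forall x y, in01 x -> in01 y -> in01 (tn x y)) /\
  (forall x y, in01 x -> in01 y -> tn x y = tn y x) /\
  (forall x y z, in01 x -> in01 y -> in01 z -> tn x (tn y z) = tn (tn x y) z) /\
  (forall x y z, in01 x -> in01 y -> in01 z -> y <= z -> tn x y <= tn x z) /\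
  (forall x, in01 x -> tn x 1 = x) /\
  (forall x y, in01 x -> in01 y -> forall eps, eps > 0 -> exists delta, delta > 0 /\
     forall x' y', in01 x' -> in01 y' -> Rabs (x' - x) < delta -> Rabs (y' - y) < delta ->
       Rabs (tn x' y' - tn x y) < eps).

Definition tconorm (tn : R -> R -> R) (c d : R) : R := 1 - tn (1 - c) (1 - d).

Definition luk_tnorm (c d : R) : R := Rmax (c + d - 1) 0.
Definition luk_tconorm (c d : R) : R := Rmin (c + d) 1.

Inductive bexpr : Type :=
| BVar : nat -> bexpr
| BBot : bexpr
| BTop : bexpr
| BAnd : bexpr -> bexpr -> bexpr
| BOr : bexpr -> bexpr -> bexpr
| BOdot : bexpr -> bexpr -> bexpr
| BNeg : bexpr -> bexpr.

Inductive formula : Type :=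
| GImp : bexpr -> bexpr -> R -> formula
| FAnd : formula -> formula -> formula
| FOr : formula -> formula -> formula
| FNot : formula -> formula.

Definition FImp (P Q : formula) : formula := FOr (FNot P) Q.

Fixpoint wf (P : formula) : Prop :=
  match P with
  | GImp _ _ c => in01 c
  | FAnd P Q => wf P /\ wf Q
  | FOr P Q => wf P /\ wf Q
  | FNot P => wf P
  end.

Inductive pform : Type :=
| PVar : nat -> pform
| PAnd : pform -> pform -> pform
| POr : pform -> pform -> pform
| PNot : pform -> pform.

Fixpoint peval (v : nat -> bool) (p : pform) : bool :=
  match p with
  | PVar n => v n
  | PAnd p q => andb (peval v p) (peval v q)
  | POr p q => orb (peval v p) (peval v q)
  | PNot p => negb (peval v p)
  end.

Definition tautology (p : pform) : Prop := forall v, peval v p = true.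

Fixpoint psubst (s : nat -> bexpr * bexpr * R) (p : pform) : formula :=
  match p with
  | PVar n => let '(a, b, c) := s n in GImp a b c
  | PAnd p q => FAnd (psubst s p) (psubst s q)
  | POr p q => FOr (psubst s p) (psubst s q)
  | PNot p => FNot (psubst s p)
  end.

Inductive LGI_axiom (tn : R -> R -> R) : formula -> Prop :=
| ax_taut : forall p s, tautology p -> wf (psubst s p) -> LGI_axiom tn (psubst s p)
| ax_and1 : forall a b g d, in01 d ->
    LGI_axiom tn (FImp (FAnd (GImp a b d) (GImp a g d)) (GImp a (BAnd b g) d))
| ax_and2 : forall a b, LGI_axiom tn (GImp (BAnd a b) a 1)
| ax_and3 : forall a b, LGI_axiom tn (GImp (BAnd a b) b 1)
| ax_or1 : forall a b g d, in01 d ->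
    LGI_axiom tn (FImp (FAnd (GImp a g d) (GImp b g d)) (GImp (BOr a b) g d))
| ax_or2 : forall a b, LGI_axiom tn (GImp a (BOr a b) 1)
| ax_or3 : forall a b, LGI_axiom tn (GImp b (BOr a b) 1)
| ax_odot1 : forall a b c d, in01 c -> in01 d ->
    LGI_axiom tn (FImp (FAnd (GImp BTop a c) (GImp BTop b d)) (GImp BTop (BOdot a b) (tn c d)))
| ax_odot2 : forall a b c d, in01 c -> in01 d ->
    LGI_axiom tn (FImp (FAnd (GImp a BBot c) (GImp b BBot d))
                       (GImp (BOdot a b) BBot (tconorm tn c d)))
| ax_odot3 : LGI_axiom tn (GImp BTop (BOdot BTop BTop) 1)
| ax_neg1 : forall a b d, in01 d ->
    LGI_axiom tn (FImp (GImp a b d) (GImp (BNeg b) (BNeg a) d))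
| ax_neg2 : forall a, LGI_axiom tn (GImp (BNeg (BNeg a)) a 1)
| ax_neg3 : forall a, LGI_axiom tn (GImp a (BNeg (BNeg a)) 1)
| ax_top : forall a, LGI_axiom tn (GImp a BTop 1)
| ax_bot : forall a, LGI_axiom tn (GImp BBot a 1)
| ax_zero : forall a b, LGI_axiom tn (GImp a b 0)
| ax_refl : forall a c, in01 c -> LGI_axiom tn (GImp a a c)
| ax_inkons : forall c, in01 c -> c > 0 -> LGI_axiom tn (FNot (GImp BTop BBot c))
| ax_trans1 : forall a b g c d, in01 c -> in01 d ->
    LGI_axiom tn (FImp (FAnd (GImp a b c) (GImp b g d)) (GImp a g (luk_tnorm c d)))
| ax_trans2 : forall a b c d, in01 c -> in01 d ->
    LGI_axiom tn (FImp (FAnd (GImp a BBot c) (GImp BTop b d)) (GImp a b (luk_tconorm c d)))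
| ax_lin1 : forall a b, LGI_axiom tn (FOr (GImp a b 1) (GImp b a 1))
| ax_lin2 : forall a d, in01 d ->
    LGI_axiom tn (FOr (GImp BTop a d) (GImp a BBot (1 - d))).

Inductive provable (tn : R -> R -> R) (T : formula -> Prop) : formula -> Prop :=
| pr_ax : forall P, LGI_axiom tn P -> provable tn T P
| pr_hyp : forall P, T P -> provable tn T P
| pr_mp : forall P Q, provable tn T P -> provable tn T (FImp P Q) -> provable tn T Q.

Definition tau (a : bexpr) (c : R) (P : formula) : Prop :=
  (exists t, in01 t /\ t < c /\ P = GImp BTop a t) \/
  (exists t, in01 t /\ t > c /\ P = GImp a BBot (1 - t)).

(* Main.v *)
Require Import Defs.
From Stdlib Require Import Reals Lra.
Open Scope R_scope.

Lemma luk_in01 x y : in01 x -> in01 y -> in01 (luk_tnorm x y).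
Proof. unfold in01, luk_tnorm, Rmax; intros; destruct (Rle_dec _ _); lra. Qed.

Lemma lukc_in01 x y : in01 x -> in01 y -> in01 (luk_tconorm x y).
Proof. unfold in01, luk_tconorm, Rmin; intros; destruct (Rle_dec _ _); lra. Qed.

Section S.
Variable tn : R -> R -> R.
Variable T : formula -> Prop.

Lemma andI_mp A1 B1 x1 A2 B2 x2 C1 C2 y :
  in01 x1 -> in01 x2 -> in01 y ->
  provable tn T (GImp A1 B1 x1) -> provable tn T (GImp A2 B2 x2) ->
  provable tn T (FImp (FAnd (GImp A1 B1 x1) (GImp A2 B2 x2)) (GImp C1 C2 y)) ->
  provable tn T (GImp C1 C2 y).
Proof.
  intros h1 h2 h3 p1 p2 p3.
  set (s := fun n : nat => match n with 0%nat => (A1,B1,x1) | 1%nat => (A2,B2,x2) | _ => (C1,C2,y) end).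
  set (p := POr (PNot (POr (PNot (PAnd (PVar 0) (PVar 1))) (PVar 2)))
               (POr (PNot (PVar 0)) (POr (PNot (PVar 1)) (PVar 2)))).
  assert (Ht : tautology p).
  { intro v; simpl; destruct (v 0%nat), (v 1%nat), (v 2%nat); reflexivity. }
  assert (Hw : wf (psubst s p)) by (simpl; tauto).
  pose proof (pr_ax tn T _ (ax_taut tn p s Ht Hw)) as H.
  simpl in H.
  eapply pr_mp; [exact p2|].
  eapply pr_mp; [exact p1|].
  eapply pr_mp; [exact p3|].
  exact H.
Qed.

Lemma contra_mp A1 B1 xa P1 P2 xp D1 D2 xd Bb1 Bb2 xb E1 E2 xe :
  in01 xa -> in01 xp -> in01 xd -> in01 xb -> in01 xe ->
  provable tn T (GImp A1 B1 xa) -> provable tn T (GImp Bb1 Bb2 xb) ->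
  provable tn T (FNot (GImp E1 E2 xe)) ->
  provable tn T (FImp (FAnd (GImp A1 B1 xa) (GImp P1 P2 xp)) (GImp D1 D2 xd)) ->
  provable tn T (FImp (FAnd (GImp D1 D2 xd) (GImp Bb1 Bb2 xb)) (GImp E1 E2 xe)) ->
  provable tn T (FNot (GImp P1 P2 xp)).
Proof.
  intros h1 h2 h3 h4 h5 p1 p2 p3 p4 p5.
  set (s := fun n : nat => match n with 0%nat => (A1,B1,xa) | 1%nat => (P1,P2,xp)
     | 2%nat => (D1,D2,xd) | 3%nat => (Bb1,Bb2,xb) | _ => (E1,E2,xe) end).
  set (imp := fun x y => POr (PNot x) y).
  set (p := imp (PVar 0) (imp (PVar 3) (imp (PNot (PVar 4))
      (imp (imp (PAnd (PVar 0) (PVar 1)) (PVar 2))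
        (imp (imp (PAnd (PVar 2) (PVar 3)) (PVar 4)) (PNot (PVar 1))))))).
  assert (Ht : tautology p).
  { intro v; unfold p, imp; simpl;
    destruct (v 0%nat), (v 1%nat), (v 2%nat), (v 3%nat), (v 4%nat); reflexivity. }
  assert (Hw : wf (psubst s p)) by (simpl; tauto).
  pose proof (pr_ax tn T _ (ax_taut tn p s Ht Hw)) as H.
  simpl in H.
  eapply pr_mp; [exact p5|].
  eapply pr_mp; [exact p4|].
  eapply pr_mp; [exact p3|].
  eapply pr_mp; [exact p2|].
  eapply pr_mp; [exact p1|].
  exact H.
Qed.

Lemma mono a b x y : in01 x -> in01 y -> y <= x ->
  provable tn T (GImp a b x) -> provable tn T (GImp a b y).
Proof.
  intros hx hy hxy p.
  assert (he : in01 (1 - x + y)) by (unfold in01 in *; lra).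
  assert (E : luk_tnorm x (1 - x + y) = y).
  { unfold luk_tnorm, Rmax, in01 in *; destruct (Rle_dec _ _); lra. }
  rewrite <- E.
  eapply andI_mp; [exact hx | exact he | rewrite E; exact hy | exact p | | ].
  - apply pr_ax, ax_refl; exact he.
  - apply pr_ax, ax_trans1; assumption.
Qed.
End S.

Theorem mainTheorem4 (tn : R -> R -> R) (Htn : is_cont_tnorm tn)
  (T : formula -> Prop) (HT : forall P, T P -> wf P)
  (a b : bexpr) (c d : R) (Hc : in01 c) (Hd : in01 d)
  (Ha : forall P, tau a c P -> provable tn T P)
  (Hb : forall P, tau b d P -> provable tn T P)
  (r : R) (Hr : in01 r) :
  (r < 1 - c + d -> provable tn T (GImp a b r)) /\
  (r > 1 - c + d -> provable tn T (FNot (GImp a b r))).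
Proof.
  assert (H01 : in01 1) by (unfold in01; lra).
  split; intro Hlt.
  - destruct (Rlt_dec r d) as [Hrd|Hrd].
    + assert (E : luk_tnorm 1 r = r).
      { unfold luk_tnorm, Rmax, in01 in *; destruct (Rle_dec _ _); lra. }
      rewrite <- E.
      eapply andI_mp; [exact H01 | exact Hr | rewrite E; exact Hr | | | ].
      * apply pr_ax, ax_top.
      * apply Hb; left; exists r; repeat split; auto; apply Hr.
      * apply pr_ax, ax_trans1; assumption.
    + destruct (Rlt_dec r (1 - c)) as [Hrc|Hrc].
      * assert (E : luk_tnorm r 1 = r).
        { unfold luk_tnorm, Rmax, in01 in *; destruct (Rle_dec _ _); lra. }
        rewrite <- E.
        eapply andI_mp; [exact Hr | exact H01 | rewrite E; exact Hr | | | ].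
        -- replace r with (1 - (1 - r)) at 1 by ring.
           apply Ha; right; exists (1 - r); unfold in01 in *; repeat split; lra.
        -- apply pr_ax, ax_bot.
        -- apply pr_ax, ax_trans1; assumption.
      * apply Rnot_lt_le in Hrd; apply Rnot_lt_le in Hrc. unfold in01 in *.
        set (eps := 1 - c + d - r).
        set (del := Rmin (eps / 2) (Rmin (1 - c) d)).
        assert (Hd1 : del <= eps / 2) by apply Rmin_l.
        assert (Hd2 : del <= 1 - c) by (eapply Rle_trans; [apply Rmin_r | apply Rmin_l]).
        assert (Hd3 : del <= d) by (eapply Rle_trans; [apply Rmin_r | apply Rmin_r]).
        assert (Hd0 : 0 < del).
        { unfold del, Rmin; destruct (Rle_dec _ _); [unfold eps; lra|].
          destruct (Rle_dec _ _); lra. }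
        set (t := c + del). set (s := d - del).
        assert (Hx : in01 (1 - t)) by (unfold in01, t; lra).
        assert (Hs : in01 s) by (unfold in01, s; lra).
        apply (mono tn T a b (luk_tconorm (1 - t) s) r); auto.
        -- apply lukc_in01; auto.
        -- unfold luk_tconorm, Rmin; destruct (Rle_dec (1 - t + s) 1); unfold t, s, eps in *; lra.
        -- eapply andI_mp; [exact Hx | exact Hs | apply lukc_in01; auto | | | ].
           ++ apply Ha; right; exists t; unfold in01, t; repeat split; lra.
           ++ apply Hb; left; exists s; unfold in01, s; repeat split; lra.
           ++ apply pr_ax, ax_trans2; assumption.
  - unfold in01 in *.
    set (eps := c - d - (1 - r)).
    set (del := Rmin (eps / 3) (Rmin c (1 - d))).
    assert (Hd1 : del <= eps / 3) by apply Rmin_l.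
    assert (Hd2 : del <= c) by (eapply Rle_trans; [apply Rmin_r | apply Rmin_l]).
    assert (Hd3 : del <= 1 - d) by (eapply Rle_trans; [apply Rmin_r | apply Rmin_r]).
    assert (Hd0 : 0 < del).
    { unfold del, Rmin; destruct (Rle_dec _ _); [unfold eps; lra|].
      destruct (Rle_dec _ _); lra. }
    set (t := c - del). set (s := d + del).
    assert (Ht : in01 t) by (unfold in01, t; lra).
    assert (Hs : in01 (1 - s)) by (unfold in01, s; lra).
    assert (Hr' : in01 r) by (unfold in01; lra).
    assert (Hg1 : in01 (luk_tnorm t r)) by (apply luk_in01; auto).
    assert (Hg2 : in01 (luk_tnorm (luk_tnorm t r) (1 - s))) by (apply luk_in01; auto).
    assert (Hpos : luk_tnorm (luk_tnorm t r) (1 - s) > 0).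
    { unfold luk_tnorm, Rmax, t, s, eps in *.
      destruct (Rle_dec (c - del + r - 1) 0); [lra|].
      destruct (Rle_dec _ _); lra. }
    eapply (contra_mp tn T BTop a t a b r BTop b (luk_tnorm t r) b BBot (1 - s)
              BTop BBot (luk_tnorm (luk_tnorm t r) (1 - s))); auto.
    + apply Ha; left; exists t; unfold in01, t; repeat split; lra.
    + replace (1 - s) with (1 - s) by reflexivity.
      apply Hb; right; exists s; unfold in01, s; repeat split; lra.
    + apply pr_ax, ax_inkons; auto.
    + apply pr_ax, ax_trans1; auto.
    + apply pr_ax, ax_trans1; auto.
Qed.
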